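(* Let $T$ be a tournament of order $n\ge 3$. If $V(T)$ has a partition $X,Y$ with $\big||X|-|Y|\big|\le 1$ such that every arc of $T$ between $X$ and $Y$ goes from $X$ to $Y$ (i.e. $(x,y)\in A(T)$ for all $x\in X$, $y\in Y$), then $T$ has no $\overrightarrow{P_3}$-decomposition.
   Context: A tournament is an orientation of a complete graph. A $\overrightarrow{P_3}$-decomposition of a digraph is a partition of its arc set into directed paths of length $2$. *)

(* Defs.v *)
From mathcomp Require Import all_boot.
Set Implicit Arguments. Unset Strict Implicit. Unset Printing Implicit Defensive.

Definition tournament (V : finType) (a : rel V) : Prop :=
  (forall x, ~~ a x x) /\
  (forall x y, x != y -> (a x y (+) a y x)).

Definition dpath3 (V : finType) (a : rel V) (p : V * V * V) : bool :=
  let: (u, v, w) := p in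
  [&& a u v, a v w, u != v, v != w & u != w].

Definition path_arcs (V : finType) (p : V * V * V) : {set V * V} :=
  let: (u, v, w) := p in [set (u, v); (v, w)].

Definition P3_decomposition (V : finType) (a : rel V) (P : {set V * V * V}) : Prop :=
  (forall p, p \in P -> dpath3 a p) /\
  (forall x y, a x y -> #|[set p in P | (x, y) \in path_arcs p]| = 1).

Definition has_P3_decomposition (V : finType) (a : rel V) : Prop :=
  exists P : {set V * V * V}, P3_decomposition a P.

(* Main.v *)
Require Import Defs.
From mathcomp Require Import all_boot.
From mathcomp Require Import zify.
Set Implicit Arguments. Unset Strict Implicit.

Section S.
Variables (V : finType) (a : rel V) (X : {set V}).
Hypothesis tour : tournament a.
Hypothesis cross : forall {x y}, x \in X -> y \in ~: X -> a x y.

Lemma no_back x y : x \in X -> y \notin X -> ~~ a y x.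
Proof.
move=> hx hy. have hxy : x != y by apply: contraNneq hy => <-.
have := tour.2 x y hxy. by rewrite (cross hx) ?inE.
Qed.

Variable P : {set V * V * V}.
Hypothesis hP : P3_decomposition a P.

Definition other (p : V * V) (q : V * V * V) : V * V :=
  let: (u, v, w) := q in if p == (u, v) then (v, w) else (u, v).

Definition g (p : V * V) : V * V :=
  match [pick q in [set q in P | p \in path_arcs q]] with
  | Some q => other p q | None => p end.

Lemma pick_spec x y : a x y ->
  exists q, [/\ g (x, y) = other (x, y) q, q \in P & (x, y) \in path_arcs q].
Proof.
move=> axy. have h1 := hP.2 x y axy. rewrite /g.
case: pickP => [q|] .
  rewrite inE => /andP [qP qa]. by exists q.
move=> h0. have : #|[set p in P | (x, y) \in path_arcs p]| = 0.
  apply: eq_card0 => q. by rewrite h0.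
by rewrite h1.
Qed.

Lemma uniq_path e q1 q2 : a e.1 e.2 -> q1 \in P -> q2 \in P ->
  e \in path_arcs q1 -> e \in path_arcs q2 -> q1 = q2.
Proof.
case: e => x y /= axy h1 h2 e1 e2. have := hP.2 x y axy.
move/eqP/cards1P => [z hz].
have : q1 \in [set z] by rewrite -hz inE h1 e1.
have : q2 \in [set z] by rewrite -hz inE h2 e2.
by rewrite !inE => /eqP -> /eqP ->.
Qed.

Definition C := [set p : V * V | (p.1 \in X) && (p.2 \in ~: X)].
Definition I := [set e : V * V | a e.1 e.2 && ((e.1 \in X) == (e.2 \in X))].

Lemma g_spec x y : (x, y) \in C -> exists q,
  [/\ g (x, y) = other (x, y) q, q \in P, (x, y) \in path_arcs q,
      other (x, y) q \in path_arcs q & other (x, y) q \in I].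
Proof.
rewrite inE /= => /andP [hx hy].
have [q [gq qP qa]] := @pick_spec x y (cross hx hy).
exists q; split => //.
  move: qa. case: q {gq qP} => [[u v] w] /=. rewrite /other.
  by case: ifP; rewrite !inE eqxx ?orbT.
have dq := hP.1 q qP.
move: qa dq. case: q {gq qP} => [[u v] w] /=. rewrite /other !inE.
move: hy; rewrite inE => hy.
move=> /orP [] /eqP [<- <-] /and5P [auv avw nuv nvw nuw] /=.
  rewrite eqxx /= avw (negbTE hy) /=.
  case hw : (w \in X) => //. by move: (@no_back w y hw hy); rewrite avw.
have -> : ((x, y) == (u, x)) = false.
  apply/negP => /eqP [e1 e2]. by rewrite e2 eqxx in nvw.
rewrite /= auv hx.
case hu : (u \in X) => //. have := @no_back x u hx (negbT hu). by rewrite auv.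
Qed.

Lemma C_le_I : #|C| <= #|I|.
Proof.
rewrite -(card_in_imset (f := g)).
  apply: subset_leq_card. apply/subsetP => e /imsetP [[x y] hC ->].
  by have [q [-> _ _ _ ->]] := @g_spec x y hC.
move=> [x1 y1] [x2 y2] h1 h2 /=.
have [q1 [-> q1P a1 o1 i1]] := @g_spec x1 y1 h1.
have [q2 [-> q2P a2 o2 i2]] := @g_spec x2 y2 h2 => e.
move: i1; rewrite inE => /andP [ae _].
rewrite e in o1 ae. have eq := uniq_path ae q1P q2P o1 o2. subst q2.
have dq := hP.1 q1 q1P.
move: a1 a2 e dq. case: q1 {q1P q2P o1 o2 ae i2} => [[u v] w] /=. rewrite !inE /other.
move=> /orP [] /eqP [-> ->] /orP [] /eqP [-> ->] //; rewrite ?eqxx.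
- case: ifP => [/eqP [-> ->] //|_ ]. by move=> [-> ->] /and5P [_ _ /eqP].
- case: ifP => [/eqP [-> ->] //|_ ]. by move=> [-> ->] /and5P [_ _ /eqP].
Qed.

End S.

Section Count.
Variables (V : finType) (a : rel V) (X : {set V}).
Hypothesis tour : tournament a.

Lemma I_count : 2 * #|I a X| + #|V| <= #|X| * #|X| + #|~: X| * #|~: X|.
Proof.
set J := setX X X :|: setX (~: X) (~: X).
have hJ : #|J| <= #|X| * #|X| + #|~: X| * #|~: X|.
  by rewrite cardsU !cardsX leq_subr.
set S := [set (e.2, e.1) | e in I a X].
set D := [set (v, v) | v : V].
have cS : #|S| = #|I a X|.
  rewrite card_in_imset // => [[x1 y1] [x2 y2]] _ _ /= [-> ->] //.
have cD : #|D| = #|V|.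
  by rewrite card_imset ?cardT ?size_enum // => x y [].
have dIS : I a X :&: S = set0.
  apply/setP => [[x y]]; rewrite !inE /=. apply/negP => /andP [/andP [axy _]].
  case/imsetP => [[y' x']]; rewrite inE /= => /andP [ayx _] [e1 e2].
  subst. have nxy : x' != y'. by apply: contraTneq axy => ->; rewrite (negbTE (tour.1 _)).
  by move: (tour.2 _ _ nxy); rewrite axy ayx.
have dID : (I a X :|: S) :&: D = set0.
  apply/setP => [[x y]]; rewrite !inE /=. apply/negP => /andP [hh].
  case/imsetP => [v _ [e1 e2]]. subst.
  case/orP: hh => [/andP [h _]|].
    by rewrite (negbTE (tour.1 _)) in h.
  case/imsetP => [[y' x']]; rewrite inE /= => /andP [h _] [e1 e2]; subst.
  by rewrite (negbTE (tour.1 _)) in h.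
have sub : (I a X :|: S) :|: D \subset J.
  apply/subsetP => [[x y]]; rewrite !inE /= => /orP [/orP []|].
  - move=> /andP [_ /eqP ->]. by case: (y \in X).
  - case/imsetP => [[y' x']]; rewrite inE /= => /andP [_ /eqP h] [-> ->].
    by rewrite h; case: (x' \in X).
  - case/imsetP => v _ [-> ->]. by case: (v \in X).
have := subset_leq_card sub. rewrite cardsU dID cards0 subn0 cardsU dIS cards0 subn0.
rewrite cS cD. lia.
Qed.
End Count.

Theorem corollary3p4 (V : finType) (a : rel V) (X : {set V}) :
  tournament a -> 3 <= #|V| ->
  (#|X| <= #|~: X| + 1 /\ #|~: X| <= #|X| + 1) ->
  (forall x y, x \in X -> y \in ~: X -> a x y) ->
  ~ has_P3_decomposition a.
Proof.
move=> tour n3 [h1 h2] cr [P hP].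
have hc := C_le_I tour cr hP. rewrite /C -/(setX X (~: X)) in hc.
rewrite cardsX in hc.
have hi := I_count X tour. have hn := cardsC X. rewrite -hn in hi n3.
nia.
Qed.
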